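(* Let $K$ be a field which is not absolutely algebraic. Then $K$ has a maximal subring which is integrally closed in $K$ and is a conch subring of $K$.
   Context: All rings are commutative with $1\neq0$ and subrings are unital. A field is absolutely algebraic if it is algebraic over $\mathbb{F}_p$ for some prime $p$. A maximal subring is a proper subring maximal with respect to inclusion among proper subrings. For a unit $x\in K$, a subring $V$ is a conch subring conching $x$ if $x^{-1}\in V$, $x\notin V$ and $V$ is maximal among subrings containing $x^{-1}$ but not $x$. *)

(* Defs.v *)
From HB Require Import structures.
From mathcomp Require Import all_boot all_order all_algebra.
Set Implicit Arguments. Unset Strict Implicit. Unset Printing Implicit Defensive.
Import Order.TTheory GRing.Theory Num.Theory.
Local Open Scope ring_scope.

Definition is_subring (K : fieldType) (S : K -> Prop) : Prop :=
  S 1 /\ (forall x y, S x -> S y -> S (x - y)) /\ (forall x y, S x -> S y -> S (x * y)).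

Definition proper_in (K : fieldType) (S : K -> Prop) : Prop := exists x : K, ~ S x.

Definition maximal_subring (K : fieldType) (V : K -> Prop) : Prop :=
  [/\ is_subring V, proper_in V &
      forall W : K -> Prop, is_subring W -> proper_in W ->
        (forall y, V y -> W y) -> forall y, W y -> V y].

Definition integrally_closed_in (K : fieldType) (V : K -> Prop) : Prop :=
  forall x : K, (exists q : {poly K}, [/\ q \is monic, forall i, V q`_i & root q x]) -> V x.

Definition conches (K : fieldType) (V : K -> Prop) (x : K) : Prop :=
  [/\ x != 0, is_subring V, V x^-1, ~ V x &
      forall W : K -> Prop, is_subring W -> W x^-1 -> ~ W x ->
        (forall y, V y -> W y) -> forall y, W y -> V y].

Definition conch_subring (K : fieldType) (V : K -> Prop) : Prop :=
  exists x : K, conches V x.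

(* K is algebraic over F_p for some prime p: K has characteristic p and every
   element is a root of a nonzero polynomial with coefficients in the prime
   subfield (the image of int in K). *)
Definition absolutely_algebraic (K : fieldType) : Prop :=
  exists p : nat, [/\ prime p, p \in [pchar K] &
    forall x : K, exists q : {poly K},
      [/\ q != 0, forall i, exists z : int, q`_i = z%:~R & root q x]].

(* Main.v *)
From HB Require Import structures.
From mathcomp Require Import all_boot all_order all_algebra.
From mathcomp Require Import boolp.
From mathcomp Require classical_sets.
From mathcomp Require Import ring zify.
Require Import Defs.
Set Implicit Arguments. Unset Strict Implicit. Unset Printing Implicit Defensive.
Import Order.TTheory GRing.Theory Num.Theory.
Local Open Scope ring_scope.

Section Sub.
Variables (K : fieldType) (V : K -> Prop) (HV : is_subring V).
Definition Vb : pred K := fun x => `[< V x >].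
Lemma Vb_closed : subring_closed Vb.
Proof.
case: HV => [h1 [hs hm]]; split.
- exact/asboolP.
- by move=> x y /asboolP a /asboolP b; apply/asboolP; apply: hs.
- by move=> x y /asboolP a /asboolP b; apply/asboolP; apply: hm.
Qed.
HB.instance Definition _ := GRing.isSubringClosed.Build K Vb Vb_closed.
Record subR := SubR { subval :> K; _ : subval \in Vb }.
Definition subT : Type := (fun _ : is_subring V => subR) HV.
HB.instance Definition _ := [isSub of subT for subval].
HB.instance Definition _ := [Choice of subT by <:].
HB.instance Definition _ := [SubChoice_isSubComNzRing of subT by <:].
Definition RtoK : {rmorphism subT -> K} := (val : subT -> K).
End Sub.

Section Gen.
Variables (K : fieldType).
Implicit Types (S : K -> Prop).

Lemma sr1 S : is_subring S -> S 1. Proof. by case. Qed.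
Lemma srB S : is_subring S -> forall x y, S x -> S y -> S (x - y). Proof. by case=> _ []. Qed.
Lemma srM S : is_subring S -> forall x y, S x -> S y -> S (x * y). Proof. by case=> _ []. Qed.
Lemma sr0 S : is_subring S -> S 0.
Proof. by move=> h; rewrite -(subrr 1); apply: srB (sr1 h) (sr1 h). Qed.
Lemma srN S : is_subring S -> forall x, S x -> S (- x).
Proof. by move=> h x hx; rewrite -sub0r; apply: srB (sr0 h) hx. Qed.
Lemma srD S : is_subring S -> forall x y, S x -> S y -> S (x + y).
Proof. by move=> h x y hx hy; rewrite -[y]opprK; apply: srB hx (srN h hy). Qed.
Lemma srX S : is_subring S -> forall x n, S x -> S (x ^+ n).
Proof. by move=> h x n hx; elim: n => [|n IH]; rewrite ?expr0 ?exprS; [apply: sr1|apply: srM]. Qed.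
Lemma srn S : is_subring S -> forall n, S n%:R.
Proof. by move=> h; elim=> [|n IH]; rewrite ?mulr0n ?mulrS; [apply: sr0|apply: srD=> //; apply: sr1]. Qed.
Lemma srz S : is_subring S -> forall z : int, S z%:~R.
Proof. by move=> h [n|n]; rewrite ?NegzE ?mulrNz; [apply: srn|apply: srN=>//; apply: srn]. Qed.
Lemma srsum S : is_subring S -> forall n (F : 'I_n -> K), (forall i, S (F i)) -> S (\sum_(i < n) F i).
Proof.
move=> h; elim=> [|n IH] F hF; first by rewrite big_ord0; apply: sr0.
by rewrite big_ord_recr /=; apply: srD => //; apply: IH.
Qed.

Definition gen S (y : K) : K -> Prop :=
  fun z => exists p : {poly K}, (forall i, S p`_i) /\ z = p.[y].

Lemma gen_sub S y : is_subring S -> is_subring (gen S y).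
Proof.
move=> h; split; [|split].
- exists 1; split; last by rewrite hornerC.
  by move=> i; rewrite coefC; case: (i == 0)%N; [apply: sr1|apply: sr0].
- move=> _ _ [p [hp ->]] [q [hq ->]]; exists (p - q); split; last by rewrite hornerD hornerN.
  by move=> i; rewrite coefB; apply: srB.
- move=> _ _ [p [hp ->]] [q [hq ->]]; exists (p * q); split; last by rewrite hornerM.
  by move=> i; rewrite coefM; apply: srsum => // j; apply: srM.
Qed.

Lemma gen_incl S y : is_subring S -> forall z, S z -> gen S y z.
Proof.
move=> h z hz; exists z%:P; split; last by rewrite hornerC.
by move=> i; rewrite coefC; case: (i == 0)%N => //; apply: sr0.
Qed.

Lemma gen_y S y : is_subring S -> gen S y y.
Proof.
move=> h; exists 'X; split; last by rewrite hornerX.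
by move=> i; rewrite coefX; case: (i == 1)%N; [apply: sr1|apply: sr0].
Qed.

Lemma gen_min S W y : is_subring W -> (forall z, S z -> W z) -> W y ->
  forall z, gen S y z -> W z.
Proof.
move=> hW hSW hy _ [p [hp ->]]; rewrite horner_coef; apply: srsum => // i.
by apply: (srM hW); [apply: hSW | apply: (srX hW)].
Qed.

Lemma gen_inv S u : is_subring S -> S u -> u != 0 -> forall w, gen S u^-1 w ->
  exists k, S (w * u ^+ k).
Proof.
move=> h hu u0 _ [p [hp ->]].
elim/poly_ind: p hp => [|p c IH] hp.
  by exists 0%N; rewrite horner0 mul0r; apply: sr0.
have hp' : forall i, S p`_i.
  move=> i; have := hp i.+1; rewrite coefD coefMX coefC /= addr0 //.
have hc : S c by have := hp 0%N; rewrite coefD coefMX coefC /= add0r.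
have [k hk] := IH hp'; exists k.+1.
rewrite hornerMXaddC mulrDl exprS mulrA -(mulrA _ u^-1 u) mulVf // mulr1.
apply: (srD h) => //; apply: (srM h) => //; by rewrite -exprS; apply: (srX h).
Qed.


Lemma int_inv S (x : K) : is_subring S -> x != 0 -> S x^-1 ->
  forall r : {poly K}, r \is monic -> (forall i, S r`_i) -> root r x -> S x.
Proof.
move=> h x0 hs r mr hr /rootP rx.
have r0 : r != 0 by apply: monic_neq0.
have sz : size r = (size r).-1.+1 by rewrite prednK // lt0n size_poly_eq0.
move: rx; rewrite horner_coef sz big_ord_recr /=.
have -> : r`_(size r).-1 = 1 by have := monicP mr; rewrite lead_coefE.
rewrite mul1r; set n := (size r).-1 => rx.
case: n rx => [|m] rx.
  by move: rx; rewrite big_ord0 add0r expr0 => /eqP; rewrite oner_eq0.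
have -> : x = - \sum_(i < m.+1) r`_i * x^-1 ^+ (m - i).
  apply: (mulIf (expf_neq0 m x0)).
  rewrite -exprS mulNr mulr_suml; apply/eqP; rewrite -addr_eq0 addrC; apply/eqP.
  rewrite -[RHS]rx; congr (_ + _); apply: eq_bigr => i _.
  rewrite -mulrA; congr (_ * _).
  have him : (i <= m)%N by rewrite -ltnS.
  have -> : x ^+ m = x ^+ (m - i) * x ^+ i by rewrite -exprD subnK.
  by rewrite mulrA -exprMn mulVf // expr1n mul1r.
apply: (srN h); apply: srsum => // i; apply: (srM h) => //; exact: srX.
Qed.

Lemma int_in (V : K -> Prop) (hV : is_subring V) e : V e -> integralOver (RtoK hV) e.
Proof.
move=> he; have he' : e \in Vb V by apply/asboolP.
have -> : e = RtoK hV (SubR he' : subT hV) by [].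
exact: integral_id.
Qed.

Section Conch.
Variables (V : K -> Prop) (x : K) (H : conches V x).

Lemma conch_gen y : ~ V y -> gen V y x.
Proof.
case: H => x0 hV hs nx hmax ny.
case: (EM (gen V y x)) => // ng; exfalso; apply: ny.
apply: (hmax (gen V y)) => //.
- exact: gen_sub.
- exact: gen_incl.
- exact: gen_incl.
- exact: gen_y.
Qed.

Lemma conch_unit a : V a -> V (1 - x^-1 * a)^-1.
Proof.
case: H => x0 hV hs nx hmax ha.
set u := 1 - x^-1 * a.
have hu : V u by apply: (srB hV); [apply: sr1|apply: (srM hV)].
have u0 : u != 0.
  apply/eqP => e; apply: nx.
  have : x^-1 * a = 1 by apply/eqP; rewrite -subr_eq0 -oppr_eq0 opprB; apply/eqP.
  move=> e'; suff -> : x = a by [].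
  by rewrite -[a]mul1r -(mulfV x0) -mulrA e' mulr1.
case: (EM (V u^-1)) => // nu; exfalso.
have [k hk] := gen_inv hV hu u0 (conch_gen nu).
have [c [hc ec]] : exists c, V c /\ u ^+ k = 1 - x^-1 * c.
  elim: k {hk} => [|k [c [hc ec]]].
    by exists 0; split; [apply: sr0 | rewrite expr0 mulr0 subr0].
  exists (c + a - x^-1 * c * a); split.
    by apply: (srB hV); [apply: (srD hV)|apply: (srM hV) => //; apply: (srM hV)].
  by rewrite exprSr ec /u; ring.
move: hk; rewrite ec mulrBr mulr1 mulrA mulfV // mul1r => hk.
by apply: nx; rewrite -(subrK c x); apply: (srD hV).
Qed.

Lemma conch_ic : integrally_closed_in V.
Proof.
move=> z [p [mp hp rz]].
have [x0 hV hs nx hmax] := H.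
case: (EM (V z)) => // nz; exfalso.
have [q [hq ex]] := conch_gen nz.
have hin : forall e, e \in (p : seq K) -> V e.
  by move=> e /(nthP 0) [i _ <-]; apply: hp.
have hinq : forall e, e \in (q : seq K) -> V e.
  by move=> e /(nthP 0) [i _ <-]; apply: hq.
have hint := int_in hV.
have := @integral_horner_root _ _ (RtoK hV) z p q mp rz
  (fun e he => hint e (hin e he)) (fun e he => hint e (hinq e he)).
rewrite -ex => -[r mr rr].
apply: nx; apply: (int_inv hV x0 hs _ _ rr).
  exact: monic_map.
move=> i; rewrite coef_map /=.
by case: (r`_i) => v hv; apply/asboolP.
Qed.

End Conch.

Lemma zornP (T : Type) (P : (T -> Prop) -> Prop) :
 (exists A, P A) ->
 (forall F : (T -> Prop) -> Prop, (forall A, F A -> P A) ->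
    (forall A B, F A -> F B -> (forall x, A x -> B x) \/ (forall x, B x -> A x)) ->
    (exists A, F A) -> P (fun x => exists A, F A /\ A x)) ->
 exists A, P A /\ forall B, P B -> (forall x, A x -> B x) -> forall x, B x -> A x.
Proof.
move=> [A0 PA0] Hch.
pose P' (A : T -> Prop) := P A \/ (forall x, ~ A x).
have [A [PA Amax]] : exists A, P' A /\ forall B, classical_sets.proper A B -> ~ P' B.
  apply: classical_sets.Zorn_bigcup => F FP Ftot.
  case: (EM (exists A, F A /\ P A)) => [[A1 [FA1 PA1]]|nF].
    left.
    have -> : classical_sets.bigcup F id = (fun x => exists A, (fun B => F B /\ P B) A /\ A x).
      apply: funext => x; apply: propext; split.
        move=> [B FB Bx]; exists B; split => //; split => //.
        case: (FP _ FB) => // /(_ x); tauto.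
      by move=> [B [[FB _] Bx]]; exists B.
    apply: Hch; first by move=> B [].
      by move=> B C [FB _] [FC _]; apply: Ftot.
    by exists A1.
  right => x [B FB Bx]; case: (FP _ FB) => [PB|/(_ x)//].
  by apply: nF; exists B.
have PA' : P A.
  case: PA => // Aem.
  case: (EM (forall x, ~ A0 x)) => [A0em|].
    have -> : A = A0 by apply: funext => x; apply: propext; split => /[dup] h;
       [move/Aem: h| move/A0em: h].
    done.
  move=> nA0; exfalso; apply: (Amax A0); last by left.
  split; first by move=> x /Aem.
  move=> sub; apply: nA0 => x /sub; exact: Aem.
exists A; split => // B PB AB x Bx.
case: (EM (A x)) => // nAx; exfalso.
apply: (Amax B); last by left.
by split => // sub; apply: nAx; apply: sub.
Qed.

Lemma chain_sub (F : (K -> Prop) -> Prop) :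
  (forall A, F A -> is_subring A) ->
  (forall A B, F A -> F B -> (forall x, A x -> B x) \/ (forall x, B x -> A x)) ->
  (exists A, F A) -> is_subring (fun x => exists A, F A /\ A x).
Proof.
move=> FS Ftot [A0 FA0]; split; [|split].
- by exists A0; split => //; apply: sr1; apply: FS.
- move=> a b [A [FA Aa]] [B [FB Bb]].
  case: (Ftot A B FA FB) => hAB.
    by exists B; split => //; apply: (srB (FS _ FB)) => //; apply: hAB.
  by exists A; split => //; apply: (srB (FS _ FA)) => //; apply: hAB.
- move=> a b [A [FA Aa]] [B [FB Bb]].
  case: (Ftot A B FA FB) => hAB.
    by exists B; split => //; apply: (srM (FS _ FB)) => //; apply: hAB.
  by exists A; split => //; apply: (srM (FS _ FA)) => //; apply: hAB.
Qed.

Lemma main (s : K) (D : K -> Prop) : s != 0 -> is_subring D -> D s -> ~ D s^-1 ->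
 (forall d, D d -> d != 0 -> exists k c h,
    [/\ D c, D c^-1, D h & d = s ^+ k * c * (1 - s * h)]) ->
 (forall y, exists q : {poly K}, [/\ q != 0, forall i, D q`_i & root q y]) ->
 exists V : K -> Prop, [/\ maximal_subring V, integrally_closed_in V & conch_subring V].
Proof.
move=> s0 hD Ds nDx Dec Alg.
set x := s^-1.
pose P (A : K -> Prop) := [/\ is_subring A, forall y, D y -> A y & ~ A x].
have [V [[hV DV nVx] Vmax]] : exists A, P A /\ forall B, P B -> (forall x, A x -> B x) -> forall x, B x -> A x.
  apply: zornP; first by exists D.
  move=> F FP Ftot [A0 FA0]; split.
  - apply: chain_sub => //; last by exists A0.
    by move=> A /FP [].
  - by move=> y Dy; exists A0; split => //; case: (FP _ FA0) => _ /(_ y Dy).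
  - by move=> [A [FA Ax]]; case: (FP _ FA) => _ _; apply.
have x0 : x != 0 by rewrite invr_eq0.
have Hc : conches V x.
  split => //; first by rewrite /x invrK; apply: DV.
  move=> W hW Wx nWx VW; apply: Vmax => //; split => // y /DV; exact: VW.
have IC := conch_ic Hc.
have key : forall y, exists k, V (s ^+ k * y).
  move=> y; have [q [q0 hq ry]] := Alg y.
  set n := (size q).-1.
  have szq : size q = n.+1 by rewrite prednK // lt0n size_poly_eq0.
  set a := lead_coef q.
  have a0 : a != 0 by rewrite lead_coef_eq0.
  have [k [c [h [Dc Dci Dh ea]]]] := Dec a (hq _) a0.
  have c0 : c != 0 by apply: contraNneq a0 => c0; rewrite ea c0 mulr0 mul0r.
  have u0 : 1 - s * h != 0 by apply: contraNneq a0 => u0; rewrite ea u0 mulr0.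
  have Vu : V (1 - s * h)^-1.
    have := conch_unit Hc (DV _ Dh); by rewrite /x invrK.
  exists k; apply: IC.
  exists (\poly_(i < n.+1) (q`_i * s ^+ (k * (n - i)) / a)); split.
  - have qn : q`_n = a by rewrite /a lead_coefE szq.
    rewrite monicE lead_coef_poly //= qn (subnn n) muln0 expr0 mulr1 ?divff //.
    exact: oner_neq0.
  - move=> i; rewrite coef_poly; case: ltnP => hi; last by apply: sr0.
    case: (ltngtP i n) => hin; last first.
    + by rewrite hin (subnn n) muln0 expr0 mulr1 divff //; apply: sr1.
    + by move: hi; rewrite ltnS leqNgt hin.
    have -> : (k * (n - i) = k * (n - i).-1 + k)%N.
      by rewrite -mulnSr prednK // subn_gt0.
    rewrite exprD ea !invfM -!mulrA; apply: (srM hV); first exact: DV.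
    apply: (srM hV); first exact/(srX hV)/DV.
    rewrite (mulrA (s ^+ k)) mulfV ?expf_neq0 // mul1r.
    by apply: (srM hV) => //; apply: DV.
  - apply/rootP; rewrite horner_poly.
    transitivity (s ^+ (k * n) / a * q.[y]); last by rewrite (rootP ry) mulr0.
    rewrite horner_coef szq mulr_sumr; apply: eq_bigr => i _.
    have hi : (i <= n)%N by rewrite -ltnS.
    have e : s ^+ (k * (n - i)) * s ^+ (k * i) = s ^+ (k * n) by rewrite -exprD -mulnDr subnK.
    rewrite exprMn -exprM -e.
    move: (s ^+ (k * (n - i))) (s ^+ (k * i)) => A B; ring.
have genall : forall y, gen V x y.
  move=> y; have [k hk] := key y.
  have -> : y = x ^+ k * (s ^+ k * y).
    by rewrite mulrA -exprMn mulVf // expr1n mul1r.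
  have hg := gen_sub x hV.
  apply: (srM hg); first exact/(srX hg)/gen_y.
  exact: gen_incl.
exists V; split => //; last by exists x.
split => //; first by exists x.
move=> W hW [w nWw] VW.
case: (EM (W x)) => Wx.
  exfalso; apply: nWw; apply: (gen_min (S := V) hW VW Wx); exact: genall.
case: Hc => _ _ _ _ hmax; apply: hmax => //.
apply: VW; by rewrite /x invrK; apply: DV.
Qed.

End Gen.

Section Cases.
Variable K : fieldType.

Definition Zimg : K -> Prop := fun y => exists z : int, y = z%:~R.

Lemma Zimg_sub : is_subring Zimg.
Proof.
split; [|split].
- by exists 1.
- by move=> _ _ [a ->] [b ->]; exists (a - b); rewrite intrB.
- by move=> _ _ [a ->] [b ->]; exists (a * b); rewrite intrM.
Qed.

Lemma nat2 n : (0 < n)%N -> exists k m, n = (2 ^ k * m.*2.+1)%N.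
Proof.
elim/ltn_ind: n => n IH n0.
have e := odd_double_half n.
case: (boolP (odd n)) => on.
  by exists 0%N, n./2; rewrite expn0 mul1n -[in LHS]e on.
have e2 : n = (n./2 * 2)%N by rewrite muln2; move: e; rewrite (negbTE on) /= add0n.
have h0 : (0 < n./2)%N by lia.
have hl : (n./2 < n)%N by lia.
have [k [m em]] := IH _ hl h0.
exists k.+1, m; rewrite e2 em expnS -muln2; lia.
Qed.

Lemma int2 (z : int) : z != 0 -> exists (k : nat) (h : int), z = (2 ^ k)%N%:Z * (1 - 2 * h).
Proof.
case: z => n nz.
  have n0 : (0 < n)%N by rewrite lt0n; apply: contraNneq nz => ->.
  have [k [m ->]] := nat2 n0.
  exists k, (- (m%:Z)); rewrite PoszM; congr (_ * _).
  rewrite -addn1 -muln2 PoszD PoszM; lia.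
have [k [m em]] := @nat2 n.+1 isT.
exists k, (m%:Z + 1); rewrite NegzE em PoszM.
rewrite -[m.*2.+1]addn1 -muln2 PoszD PoszM; ring.
Qed.

Lemma intr_char0 : (forall n : nat, n%:R = 0 :> K -> n = 0%N) ->
  forall z : int, z%:~R = 0 :> K -> z = 0.
Proof.
move=> h [n|n] /=; first by move/h => ->.
rewrite NegzE mulrNz => /eqP; rewrite oppr_eq0 => /eqP /h //.
Qed.

Lemma case_char0 : (forall n : nat, n%:R = 0 :> K -> n = 0%N) ->
  (forall y : K, exists q : {poly K}, [/\ q != 0, forall i, Zimg q`_i & root q y]) ->
  exists V : K -> Prop, [/\ maximal_subring V, integrally_closed_in V & conch_subring V].
Proof.
move=> h0 alg.
have hz := intr_char0 h0.
have two0 : (2 : K) != 0 by apply/eqP => /h0.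
apply: (main (s := 2) (D := Zimg)) => //.
- exact: Zimg_sub.
- by exists 2.
- move=> [z ez].
  have : ((1 - 2 * z)%:~R : K) = 0.
    by rewrite intrB intrM -ez mulfV // subrr.
  move/hz => /eqP; lia.
- move=> _ [z ->] dz.
  have z0 : z != 0 by apply: contraNneq dz => ->.
  have [k [h ->]] := int2 z0.
  exists k, 1, h%:~R; split.
  + by exists 1.
  + by rewrite invr1; exists 1.
  + by exists h.
  rewrite mulr1 intrM intrB intrM.
  have e2 : ((2 ^ k)%N%:~R : K) = ((2 ^ k)%N)%:R by [].
  by rewrite e2 natrX.
Qed.

Definition Trans (t : K) (F : K -> Prop) :=
  forall q : {poly K}, (forall i, F q`_i) -> root q t -> q = 0.

Lemma chain_fin (F : (K -> Prop) -> Prop) :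
  (forall A B, F A -> F B -> (forall x, A x -> B x) \/ (forall x, B x -> A x)) ->
  (exists A, F A) -> forall n (f : nat -> K), (forall i, (i < n)%N -> exists A, F A /\ A (f i)) ->
  exists A, F A /\ forall i, (i < n)%N -> A (f i).
Proof.
move=> Ftot [A0 FA0]; elim=> [|n IH] f hf; first by exists A0.
have [A [FA hA]] := IH f (fun i hi => hf i (ltnW hi)).
have [B [FB hB]] := hf n (ltnSn n).
case: (Ftot A B FA FB) => hAB.
  exists B; split => // i; rewrite ltnS leq_eqVlt => /orP [/eqP ->//|hi].
  by apply: hAB; apply: hA.
exists A; split => // i; rewrite ltnS leq_eqVlt => /orP [/eqP ->|hi].
  by apply: hAB.
by apply: hA.
Qed.

Lemma uniform_bound (P : nat -> nat -> Prop) :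
  (forall i k k', (k <= k')%N -> P i k -> P i k') -> (forall i, exists k, P i k) ->
  forall n, exists k, forall i, (i < n)%N -> P i k.
Proof.
move=> mono ex; elim=> [|n [k hk]]; first by exists 0%N.
have [k' hk'] := ex n.
exists (maxn k k') => i; rewrite ltnS leq_eqVlt => /orP [/eqP ->|hi].
  by apply: mono hk'; apply: leq_maxr.
by apply: mono (hk i hi); apply: leq_maxl.
Qed.

Lemma poly_tail (g : {poly K}) :
  g = (\poly_(i < (size g).-1) g`_i.+1) * 'X + (g`_0)%:P.
Proof.
apply/polyP => i; rewrite coefD coefMX coefC.
case: i => [|i] /=; first by rewrite add0r.
rewrite addr0 coef_poly; case: ltnP => // hi.
by rewrite nth_default //; move: hi; case: (size g).
Qed.

Lemma case_trans (t : K) : Trans t Zimg ->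
  exists V : K -> Prop, [/\ maximal_subring V, integrally_closed_in V & conch_subring V].
Proof.
move=> T0.
pose P (A : K -> Prop) := is_subring A /\ Trans t A.
have [F [[hF TF] Fmax]] : exists A, P A /\ forall B, P B -> (forall x, A x -> B x) -> forall x, B x -> A x.
  apply: zornP; first by exists Zimg; split => //; apply: Zimg_sub.
  move=> Fc FP Ftot Fne; split.
    by apply: chain_sub => // A /FP [].
  move=> q hq rq.
  have [A [FA hA]] := @chain_fin Fc Ftot Fne (size q) (fun i => q`_i) (fun i _ => hq i).
  have [hA1 TA] := FP _ FA.
  apply: TA rq => i; case: (ltnP i (size q)) => hi; first exact: hA.
  by rewrite nth_default //; apply: sr0.
have Finv : forall a, F a -> a != 0 -> F a^-1.
  move=> a Fa a0.
  have hg := gen_sub a^-1 hF.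
  suff Pg : P (gen F a^-1).
    by apply: (Fmax _ Pg); [apply: gen_incl | apply: gen_y].
  split => // q hq rq.
  have [K0 hK] : exists k, forall i, (i < size q)%N -> F (q`_i * a ^+ k).
    apply: uniform_bound => [i k k' hkk' hk|i].
      by rewrite -(subnK hkk') addnC exprD mulrA; apply: (srM hF) => //; apply: (srX hF).
    exact: gen_inv hF Fa a0 _ (hq i).
  have : a ^+ K0 *: q = 0.
    apply: TF; last by rewrite /root hornerZ (rootP rq) mulr0.
    move=> i; rewrite coefZ mulrC; case: (ltnP i (size q)) => hi; first exact: hK.
    by rewrite nth_default // mul0r; apply: sr0.
  by move/eqP; rewrite scaler_eq0 expf_eq0 (negbTE a0) andbF /= => /eqP.
set D := gen F t.
have hD : is_subring D := gen_sub t hF.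
have FD : forall y, F y -> D y := gen_incl t hF.
have t0 : t != 0.
  apply/eqP => e.
  have hX : forall i, F ('X : {poly K})`_i.
    by move=> i; rewrite coefX; case: (i == 1)%N; [apply: sr1|apply: sr0].
  have := TF 'X hX; rewrite /root hornerX e eqxx => /(_ isT) /eqP.
  by rewrite polyX_eq0.
apply: (main (s := t) (D := D)) => //.
- exact: gen_y.
- move=> [g [hg eg]].
  have : g * 'X - 1 = 0.
    apply: TF.
      move=> i; rewrite coefB coefMX coefC; apply: (srB hF).
        by case: i => [|i]; [apply: sr0 | apply: hg].
      by case: (i == 0)%N; [apply: sr1|apply: sr0].
    by rewrite /root hornerD hornerN hornerMX hornerC -eg mulVf // subrr.
  move/(congr1 (fun p : {poly K} => p`_0)); rewrite coefB coefMX coefC /= sub0r.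
  by rewrite coef0 => /eqP; rewrite oppr_eq0 oner_eq0.
-
  have dec : forall n (g : {poly K}), (size g <= n)%N -> (forall i, F g`_i) -> g.[t] != 0 ->
      exists k c h, [/\ D c, D c^-1, D h & g.[t] = t ^+ k * c * (1 - t * h)].
    elim=> [|n IH] g sg hg gt0.
      by move: gt0; move: sg; rewrite leqn0 size_poly_eq0 => /eqP ->; rewrite horner0 eqxx.
    set tl := \poly_(i < (size g).-1) g`_i.+1.
    have htl : forall i, F tl`_i.
      by move=> i; rewrite coef_poly; case: ifP => _; [apply: hg | apply: sr0].
    have eg : g.[t] = tl.[t] * t + g`_0 by rewrite {1}(poly_tail g) hornerMXaddC.
    have Dtl : D tl.[t] by exists tl.
    case: (eqVneq g`_0 0) => g00.
      rewrite eg g00 addr0 in gt0 *.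
      have tl0 : tl.[t] != 0 by apply: contraNneq gt0 => ->; rewrite mul0r.
      have stl : (size tl <= n)%N.
        by apply: leq_trans (size_poly _ _) _; lia.
      have [k [c [h [Dc Dci Dh ->]]]] := IH tl stl htl tl0.
      by exists k.+1, c, h; split => //; rewrite exprSr; ring.
    exists 0%N, g`_0, (- ((g`_0)^-1 * tl.[t])); split.
    + exact: FD (hg 0%N).
    + exact/FD/Finv.
    + by apply: (srN hD); apply: (srM hD) => //; apply/FD/Finv.
    by rewrite eg expr0 mul1r; field; rewrite g00.
  move=> _ [g [hg ->]] gt0.
  exact: dec (leqnn _) hg gt0.
-
  move=> y; case: (EM (F y)) => Fy.
    exists ('X - y%:P); split.
    + exact: monic_neq0 (monicXsubC y).
    + move=> i; apply: FD; rewrite coefB coefX coefC; apply: (srB hF).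
        by case: (i == 1)%N; [apply: sr1|apply: sr0].
      by case: (i == 0)%N; [apply: Fy|apply: sr0].
    + by rewrite root_XsubC.
  have nT : ~ Trans t (gen F y).
    move=> Tg; apply: Fy; apply: (Fmax (gen F y)); [split=> //; exact: gen_sub| |].
      exact: gen_incl.
    exact: gen_y.
  have [q [hq rq q0]] : exists q : {poly K}, [/\ forall i, gen F y q`_i, root q t & q != 0].
    case: (EM (exists q : {poly K}, [/\ forall i, gen F y q`_i, root q t & q != 0])) => // nq.
    exfalso; apply: nT => q hq rq; case: (eqVneq q 0) => // q0.
    by exfalso; apply: nq; exists q.
  have [f hf] := choice hq.
  pose r := \sum_(i < size q) t ^+ i *: f i.
  exists r; split.
  + set m := (size q).-1.
    have szq : size q = m.+1 by rewrite prednK // lt0n size_poly_eq0.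
    have qm : q`_m != 0 by rewrite /m -lead_coefE lead_coef_eq0.
    have [hfm efm] := hf m.
    have fm0 : f m != 0 by apply: contraNneq qm => e; rewrite efm e horner0.
    set j := (size (f m)).-1.
    have fmj : (f m)`_j != 0 by rewrite /j -lead_coefE lead_coef_eq0.
    set gj := \poly_(i < size q) (f i)`_j.
    have gj0 : gj != 0.
      apply: contraNneq fmj => e.
      apply/eqP; have := congr1 (fun p : {poly K} => p`_m) e; rewrite /= coef_poly szq ltnSn coef0; apply.
    have hgj : forall i, F gj`_i.
      by move=> i; rewrite coef_poly; case: ifP => _; [case: (hf i) => + _; apply|apply: sr0].
    have gjt : gj.[t] != 0.
      apply/negP => /eqP e; apply/negP: gj0; apply/negPn/eqP; apply: TF hgj _.
      exact/rootP.
    apply: contraNneq gjt => r0.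
    have := congr1 (fun p : {poly K} => p`_j) r0; rewrite coef0 /r coef_sum => <-.
    apply/eqP; rewrite horner_poly; apply: eq_bigr => i _; by rewrite coefZ mulrC.
  + move=> j; rewrite /r coef_sum.
    exists (\poly_(i < size q) (f i)`_j); split.
      by move=> i; rewrite coef_poly; case: ifP => _; [case: (hf i) => + _; apply|apply: sr0].
    rewrite horner_poly; apply: eq_bigr => i _; by rewrite coefZ mulrC.
  + apply/rootP; rewrite /r horner_sum.
    transitivity q.[t]; last exact/rootP.
    rewrite [q.[t]]horner_coef; apply: eq_bigr => i _.
    by rewrite hornerZ; case: (hf i) => _ <-; rewrite mulrC.
Qed.

End Cases.

Theorem corollary2p3 (K : fieldType) :
  ~ absolutely_algebraic K ->
  exists V : K -> Prop,
    [/\ maximal_subring V, integrally_closed_in V & conch_subring V].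
Proof.
move=> nabs.
case: (EM (exists t : K, Trans t (@Zimg K))) => [[t Tt]|nt].
  exact: case_trans Tt.
have alg : forall y : K, exists q : {poly K}, [/\ q != 0, forall i, @Zimg K q`_i & root q y].
  move=> y; case: (EM (exists q : {poly K}, [/\ q != 0, forall i, @Zimg K q`_i & root q y])) => // nq.
  exfalso; apply: nt; exists y => q hq rq; case: (eqVneq q 0) => // q0.
  by exfalso; apply: nq; exists q.
apply: case_char0 => // n hn.
case: (posnP n) => // n0; exfalso; apply: nabs.
have [p hp] := natf0_pchar n0 (introT eqP hn).
exists p; split => //; first exact: pcharf_prime hp.
Qed.
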